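(* Let $c\ge3$ be an integer and $K(t,t')=\frac{2c}{c+1}\cdot\frac{t'^{2/(c-1)}}{\sum_{i=1}^{t} i^{2/(c-1)}}\cdot\mathbf{1}[t\ge t']$ for positive integers $t,t'$. Then for all positive integers $t''<t$, $$\sum_{q=t''}^{t-1}K(q,t'')\ge c\left(1-\left(\frac{t''}{t}\right)^{2/(c-1)}\right).$$ *)

(* Defs.v *)
From Stdlib Require Import Reals Lra Lia List.
Open Scope R_scope.

Definition expo (c : nat) : R := 2 / (INR c - 1).

(* sum_{q=m}^{n-1} f q  (empty if n <= m) *)
Definition sum_range (m n : nat) (f : nat -> R) : R :=
  fold_right Rplus 0 (map f (seq m (n - m))).

Definition K (c t t' : nat) : R :=
  if Nat.leb t' t then
    (2 * INR c / (INR c + 1)) *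
    (Rpower (INR t') (expo c) / sum_range 1 (t + 1) (fun i => Rpower (INR i) (expo c)))
  else 0.

(* Main.v *)
Require Import Defs.
From Stdlib Require Import Reals Lra Lia List.
Open Scope R_scope.
From Stdlib Require Import Reals Lra Lia List.
From Coquelicot Require Import Coquelicot.
Open Scope R_scope.

Lemma mono_cl (f df : R -> R) (lo : R) :
  (forall x, lo <= x -> is_derive f x (df x)) ->
  (forall x, lo <= x -> 0 <= df x) ->
  forall x y, lo <= x -> x <= y -> f x <= f y.
Proof.
  intros Hd Hp x y Hx Hxy.
  destruct (MVT_gen f x y df) as [c [Hc He]].
  - intros z Hz. apply Hd.
    rewrite Rmin_left in Hz by lra. lra.
  - intros z Hz. rewrite Rmin_left in Hz by lra. rewrite Rmax_right in Hz by lra.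
    apply derivable_continuous_pt. exists (df z). apply is_derive_Reals. apply Hd. lra.
  - rewrite Rmin_left in Hc by lra. rewrite Rmax_right in Hc by lra.
    assert (0 <= df c) by (apply Hp; lra). nra.
Qed.

Lemma exp_le_mono x y : x <= y -> exp x <= exp y.
Proof. intros [H|H]; [left; apply exp_increasing; auto | subst; lra]. Qed.

Lemma conv_exp (a v : R) : 0 < a <= 1 -> 0 <= v ->
  exp (2*a*v) <= 1 + a * (exp (2*v) - 1).
Proof.
  intros Ha Hv.
  set (H := fun v => 1 + a * (exp (2*v) - 1) - exp (2*a*v)).
  assert (H 0 <= H v).
  { apply (mono_cl H (fun v => 2*a*exp (2*v) - 2*a*exp(2*a*v)) 0); try lra.
    - intros x _. unfold H. auto_derive; auto. ring.
    - intros x Hx.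
      assert (exp (2*a*x) <= exp (2*x)) by (apply exp_le_mono; nra). nra. }
  unfold H in H0. rewrite !Rmult_0_r, exp_0 in H0. lra.
Qed.

Lemma sinh_ineq (a v : R) : 0 < a <= 1 -> 0 <= v ->
  exp (a*v) - exp (-(a*v)) <= a * (exp v - exp (-v)).
Proof.
  intros Ha Hv.
  set (G := fun v => a * (exp v - exp (-v)) - (exp (a*v) - exp (-(a*v)))).
  assert (G 0 <= G v).
  { apply (mono_cl G (fun v => a*(exp v + exp (-v)) - a*(exp (a*v) + exp (-(a*v)))) 0); try lra.
    - intros x _. unfold G. auto_derive; auto. ring.
    - intros x Hx.
      assert (exp (a*x) <= exp x) by (apply exp_le_mono; nra).
      assert (E: exp x + exp (-x) - (exp (a*x) + exp (-(a*x)))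
                 = (exp x - exp (a*x)) * (1 - exp (-x - a*x))).
      { replace (-x - a*x) with ((-x) + (-(a*x))) by ring. rewrite exp_plus, !exp_Ropp.
        assert (exp x > 0) by apply exp_pos. assert (exp (a*x) > 0) by apply exp_pos.
        field; lra. }
      assert (exp (-x - a*x) <= 1) by (rewrite <- exp_0; apply exp_le_mono; nra).
      assert (0 <= exp x + exp (-x) - (exp (a*x) + exp (-(a*x)))) by (rewrite E; nra).
      nra. }
  unfold G in H. rewrite !Rmult_0_r, Ropp_0, exp_0 in H. lra.
Qed.

Definition Ff (a v : R) := / (exp (2*a*v) - 1) - / (a * (exp (2*v) - 1)).

Lemma exp2 (x : R) : exp (2*x) = exp x * exp x.
Proof. rewrite <- exp_plus. f_equal. ring. Qed.

Lemma Ff_dec (a u w : R) : 0 < a <= 1 -> 0 < u -> u <= w -> Ff a w <= Ff a u.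
Proof.
  intros Ha Hu Huw.
  set (df := fun v => 2*a*exp (2*a*v) / (exp (2*a*v) - 1)^2 - 2*exp (2*v) / (a*(exp (2*v) - 1)^2)).
  assert (- Ff a u <= - Ff a w); [|lra].
  apply (mono_cl (fun v => - Ff a v) df u); try lra.
  - intros x Hx.
    assert (h1 : 1 < exp (2*a*x)) by (rewrite <- exp_0; apply exp_increasing; nra).
    assert (h2 : 1 < exp (2*x)) by (rewrite <- exp_0; apply exp_increasing; nra).
    unfold Ff, df. auto_derive.
    + split; [lra|split; [|auto]]. intro. nra.
    + field. split; [lra|split; lra].
  - intros x Hx.
    assert (hv : 0 <= x) by lra.
    pose proof (sinh_ineq a x Ha hv) as S.
    rewrite !exp_Ropp in S.
    unfold df. replace (2*a*x) with (2*(a*x)) by ring. rewrite !exp2.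
    set (al := exp (a*x)) in *. set (be := exp x) in *.
    assert (h1 : 1 < al) by (unfold al; rewrite <- exp_0; apply exp_increasing; nra).
    assert (h2 : 1 < be) by (unfold be; rewrite <- exp_0; apply exp_increasing; nra).
    assert (S2 : be*(al*al-1) <= a*al*(be*be-1)).
    { apply Rmult_le_reg_r with (/ (al*be)). apply Rinv_0_lt_compat; nra.
      replace (be*(al*al-1) * / (al*be)) with (al - /al) by (field; lra).
      replace (a*al*(be*be-1) * / (al*be)) with (a*(be - /be)) by (field; lra). lra. }
    assert (0 < al*al - 1) by nra. assert (0 < be*be-1) by nra.
    assert (S3 : (be*(al*al-1))^2 <= (a*al*(be*be-1))^2).
    { apply pow_incr. split; [apply Rmult_le_pos; lra|exact S2]. }
    apply Rminus_le_0 in S3.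
    assert (E: 2*a*(al*al)/(al*al-1)^2 - 2*(be*be)/(a*(be*be-1)^2)
      = 2 * ((a*al*(be*be-1))^2 - (be*(al*al-1))^2) / (a * (al*al-1)^2 * (be*be-1)^2)).
    { field. lra. }
    rewrite E. apply Rmult_le_pos; [nra|]. left; apply Rinv_0_lt_compat.
    apply Rmult_lt_0_compat; [apply Rmult_lt_0_compat|]; try lra; apply pow_lt; lra.
Qed.
Definition fq (a q : R) := Rpower q a / (Rpower (q+1) a - Rpower q a).

Lemma Rpow_gt (a x y : R) : 0 < a -> 0 < x < y -> Rpower x a < Rpower y a.
Proof. intros; apply Rlt_Rpower_l; auto. Qed.

Lemma Rpow_pos (a x : R) : 0 < Rpower x a.
Proof. unfold Rpower; apply exp_pos. Qed.

Lemma Ff_at (a q : R) : 0 < a -> 0 < q ->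
  Ff a (ln ((q+1)/q) / 2) = fq a q - q / a.
Proof.
  intros Ha Hq.
  unfold Ff, fq.
  replace (2 * a * (ln ((q + 1) / q) / 2)) with (a * ln ((q+1)/q)) by field.
  replace (2 * (ln ((q + 1) / q) / 2)) with (ln ((q+1)/q)) by field.
  rewrite exp_ln by (apply Rdiv_lt_0_compat; lra).
  unfold Rdiv at 1. rewrite ln_mult, ln_Rinv by (try apply Rinv_0_lt_compat; lra).
  rewrite Rmult_plus_distr_l, exp_plus.
  replace (a * - ln q) with (- (a * ln q)) by ring. rewrite exp_Ropp.
  pose proof (Rpow_gt a q (q+1) Ha ltac:(lra)).
  unfold Rpower in *.
  set (A := exp (a * ln (q+1))) in *. set (B := exp (a * ln q)) in *.
  assert (0 < B) by apply exp_pos.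
  field. repeat split; try lra.
Qed.

Lemma fq_step (a q : R) : 0 < a <= 1 -> 0 < q ->
  fq a (q+1) - (q+1)/a >= fq a q - q/a.
Proof.
  intros Ha Hq.
  rewrite <- !Ff_at by lra.
  apply Rle_ge, Ff_dec; [lra| |].
  - apply Rdiv_lt_0_compat; [|lra]. rewrite <- ln_1. apply ln_increasing; [lra|].
    apply Rmult_lt_reg_r with (q+1); [lra|]. field_simplify; lra.
  - apply Rmult_le_compat_r; [lra|].
    assert ((q+1+1)/(q+1) <= (q+1)/q).
    { apply Rmult_le_reg_r with (q*(q+1)); [nra|]. field_simplify; nra. }
    destruct H as [H|H]; [left; apply ln_increasing; auto|rewrite H; lra].
    apply Rdiv_lt_0_compat; lra.
Qed.

Lemma Ff_nonneg (a v : R) : 0 < a <= 1 -> 0 < v -> 0 <= Ff a v.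
Proof.
  intros Ha Hv. pose proof (conv_exp a v Ha ltac:(lra)).
  assert (1 < exp (2*a*v)) by (rewrite <- exp_0; apply exp_increasing; nra).
  unfold Ff. apply Rge_le, Rge_minus, Rle_ge. apply Rinv_le_contravar; lra.
Qed.

Lemma fold_plus_init (x : R) (l : list R) :
  fold_right Rplus x l = fold_right Rplus 0 l + x.
Proof. induction l; simpl; [lra|rewrite IHl; lra]. Qed.

Lemma sum_range_snoc m n f : (m <= n)%nat ->
  sum_range m (S n) f = sum_range m n f + f n.
Proof.
  intros H. unfold sum_range.
  replace (S n - m)%nat with (S (n - m)) by lia.
  rewrite seq_S, map_app, fold_right_app. simpl.
  replace (m + (n - m))%nat with n by lia.
  rewrite fold_plus_init. lra.
Qed.

Lemma sum_range_empty m f : sum_range m m f = 0.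
Proof. unfold sum_range. rewrite Nat.sub_diag. reflexivity. Qed.

Lemma Rpower_div (a x y : R) : 0 < x -> 0 < y ->
  Rpower (x / y) a = Rpower x a / Rpower y a.
Proof.
  intros. unfold Rpower, Rdiv. rewrite ln_mult, ln_Rinv by (try apply Rinv_0_lt_compat; lra).
  rewrite Rmult_plus_distr_l, exp_plus.
  replace (a * - ln y) with (- (a * ln y)) by ring. rewrite exp_Ropp. reflexivity.
Qed.

Section Main.
Variable a : R.
Hypothesis Ha : 0 < a <= 1.

Let P (q : nat) := Rpower (INR q) a.
Let SS (q : nat) := sum_range 1 (q+1) P.

Lemma P1 : P 1 = 1.
Proof. unfold P. simpl. unfold Rpower. rewrite ln_1, Rmult_0_r. apply exp_0. Qed.

Lemma Pgt q : (1 <= q)%nat -> P q < P (q+1).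
Proof. intros. unfold P. rewrite plus_INR. simpl. apply Rpow_gt; [lra|].
  assert (1 <= INR q) by (apply (le_INR 1); auto). lra. Qed.

Lemma fq_eq q : (1 <= q)%nat -> fq a (INR q) = P q / (P (q+1) - P q).
Proof. intros. unfold fq, P. rewrite plus_INR. reflexivity. Qed.

Lemma fq_base : fq a 1 >= 1 / a.
Proof.
  pose proof (Ff_at a 1 ltac:(lra) ltac:(lra)).
  assert (0 < ln ((1+1)/1) / 2).
  { apply Rdiv_lt_0_compat; [|lra]. rewrite <- ln_1. apply ln_increasing; lra. }
  pose proof (Ff_nonneg a _ Ha H0). lra.
Qed.

Lemma S_bound q : (1 <= q)%nat -> 0 < SS q <= (a/(a+1)) * P (q+1) * fq a (INR q).
Proof.
  induction q as [|q IH]; intros Hq; [lia|].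
  destruct (Nat.eq_dec q 0) as [->|Hq0].
  - unfold SS. simpl. unfold sum_range. simpl. fold (P 1). rewrite P1.
pose proof (fq_eq 1 ltac:(lia)) as F. simpl in F. rewrite P1 in F.
    pose proof (fq_base) as H. rewrite F in *.
    pose proof (Pgt 1 ltac:(lia)) as H0. rewrite P1 in H0. simpl in H0.
    set (X := P 2) in *.
    split; [lra|].
    assert (X / (X - 1) = 1 + 1 / (X - 1)) by (field; lra).
    assert (X * (1/(X-1)) = 1 + 1/(X-1)) by (field; lra).
    assert (a/(a+1) * (1 + 1/a) = 1) by (field; lra).
    assert (1 + 1/(X-1) >= 1 + 1/a) by lra.
    assert (0 < a/(a+1)) by (apply Rdiv_lt_0_compat; lra).
    nra.
  - assert (1 <= q)%nat by lia. specialize (IH H).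
    unfold SS in *. replace (S q + 1)%nat with (S (q+1)) by lia.
    rewrite sum_range_snoc by lia.
    pose proof (fq_step a (INR q) Ha ltac:(apply lt_0_INR; lia)) as Hs.
    replace (INR q + 1) with (INR (S q)) in Hs by (rewrite S_INR; lra).
    assert (Ppos : 0 < P (q+1)) by apply Rpow_pos.
    split; [lra|].
    pose proof (Pgt (q+1) ltac:(lia)) as G.
    replace (q+1+1)%nat with (S (q+1)) in G by lia.
    assert (E : P (S (q+1)) * fq a (INR (S q)) = P (q+1) * (1 + fq a (INR (S q)))).
    { rewrite fq_eq by lia. replace (S q + 1)%nat with (S (q+1)) by lia.
      replace (S q) with (q+1)%nat by lia. field. lra. }
    rewrite Rmult_assoc, E. replace (S q) with (q+1)%nat in * by lia.
    rewrite plus_INR in Hs. simpl in Hs.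
    assert (Hk1 : a/(a+1) * (1 + 1/a) = 1) by (field; lra).
    assert (0 < a/(a+1)) by (apply Rdiv_lt_0_compat; lra).
    assert (fq a (INR (q+1)) >= fq a (INR q) + 1/a).
    { rewrite plus_INR. simpl. unfold Rdiv in *. lra. }
    set (k := a/(a+1)) in *. set (p1 := P (q+1)) in *.
    set (f0 := fq a (INR q)) in *. set (f1 := fq a (INR (q+1))) in *.
    assert (0 <= k * p1 * (f1 - f0 - 1/a)) by (apply Rmult_le_pos; [apply Rmult_le_pos|]; lra).
    assert (Hr : k * (p1 * (1 + f1)) = k*p1*f0 + p1 * (k * (1 + 1/a)) + k * p1 * (f1 - f0 - 1/a)) by ring.
    assert (sum_range 1 (q + 1) P <= k * p1 * f0) by lra.
    rewrite Hr, Hk1. lra.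
Qed.

Lemma term q : (1 <= q)%nat -> ((a+1)/a) * (1/P q - 1/P (q+1)) <= 1 / SS q.
Proof.
  intros Hq. destruct (S_bound q Hq) as [H0 H1].
  rewrite fq_eq in H1 by lia.
  pose proof (Pgt q Hq). assert (0 < P q) by apply Rpow_pos.
  set (B := a / (a + 1) * P (q + 1) * (P q / (P (q + 1) - P q))) in *.
  assert (0 < B).
  { unfold B. apply Rmult_lt_0_compat; [apply Rmult_lt_0_compat|].
    apply Rdiv_lt_0_compat; lra. lra. apply Rdiv_lt_0_compat; lra. }
  replace (((a+1)/a) * (1/P q - 1/P (q+1))) with (1 / B) by (unfold B; field; lra).
  unfold Rdiv. rewrite !Rmult_1_l. apply Rinv_le_contravar; lra.
Qed.

Lemma tele m k (C : R) (g : nat -> R) : (1 <= m)%nat -> 0 <= C ->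
  (forall q, (m <= q)%nat -> g q >= C * P m * ((a+1)/a) * (1/P q - 1/P (q+1))) ->
  sum_range m (m+k) g >= C * P m * ((a+1)/a) * (1/P m - 1/P (m+k)).
Proof.
  intros Hm HC Hg. induction k.
  - rewrite Nat.add_0_r, sum_range_empty. lra.
  - replace (m + S k)%nat with (S (m+k)) by lia.
    rewrite sum_range_snoc by lia.
    specialize (Hg (m+k)%nat ltac:(lia)). replace (m+k+1)%nat with (S (m+k)) in Hg by lia.
    set (u := C * P m * ((a + 1) / a)) in *. lra.
Qed.

End Main.

Theorem mainTheorem9 (c t t'' : nat) (hc : (3 <= c)%nat)
  (ht'' : (1 <= t'')%nat) (hlt : (t'' < t)%nat) :
  sum_range t'' t (fun q => K c q t'') >=
  INR c * (1 - Rpower (INR t'' / INR t) (expo c)).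
Proof.
  assert (Hc : 3 <= INR c) by (replace 3 with (INR 3) by (simpl; lra); apply le_INR; auto).
  set (a := expo c).
  assert (Ha : 0 < a <= 1).
  { unfold a, expo. split. apply Rdiv_lt_0_compat; lra.
    apply Rmult_le_reg_r with (INR c - 1); [lra|]. field_simplify; lra. }
  set (C := 2 * INR c / (INR c + 1)).
  assert (HC : 0 <= C) by (unfold C; apply Rmult_le_pos; [lra|left; apply Rinv_0_lt_compat; lra]).
  assert (HCa : C * ((a+1)/a) = INR c).
  { unfold C, a, expo. field. lra. }
  pose proof (tele a t'' (t - t'') C (fun q => K c q t'') ht'' HC) as T.
  replace (t'' + (t - t''))%nat with t in T by lia.
  assert (Pm : 0 < Rpower (INR t'') a) by apply Rpow_pos.
  assert (Pt : 0 < Rpower (INR t) a) by apply Rpow_pos.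
  assert (Hm : 0 < INR t'') by (apply lt_0_INR; lia).
  assert (Htp : 0 < INR t) by (apply lt_0_INR; lia).
  rewrite Rpower_div by lra. fold a.
  eapply Rge_trans; [apply T|].
  - intros q Hq. unfold K. replace (Nat.leb t'' q) with true by (symmetry; apply Nat.leb_le; auto).
    pose proof (term a Ha q ltac:(lia)) as Tq.
    fold a. fold C. cbv beta in Tq.
    apply Rle_ge.
    set (L := (a + 1) / a * (1 / Rpower (INR q) a - 1 / Rpower (INR (q + 1)) a)) in *.
    set (Sq := sum_range 1 (q + 1) (fun i : nat => Rpower (INR i) a)) in *.
    replace (C * Rpower (INR t'') a * ((a + 1) / a) * (1 / Rpower (INR q) a - 1 / Rpower (INR (q + 1)) a))
      with ((C * Rpower (INR t'') a) * L) by (unfold L; ring).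
    replace (C * (Rpower (INR t'') a / Sq)) with ((C * Rpower (INR t'') a) * (1 / Sq)) by (unfold Rdiv; ring).
    apply Rmult_le_compat_l; [apply Rmult_le_pos; lra|]. exact Tq.
  - right. replace (C * Rpower (INR t'') a * ((a + 1) / a)) with (INR c * Rpower (INR t'') a)
      by (rewrite <- HCa; ring).
    field. lra.
Qed.
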